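(* With the notation of the context, let $\hat u=\frac{\ell}{\ell-1}u$, and let $(\bar x,\bar y)$ be an integral solution of the capacitated facility location instance with client set $C_r$ and capacity $\hat u$ that serves every client of $C_r$, violates capacities by a factor at most $\beta$ (each open facility $i$ has $\sum_{j\in C_r}\bar x_{ij}\le\beta\hat u$), and has cost $\sum_{j\in C_r}\sum_i c(i,j)\bar x_{ij}+\sum_i f_i\bar y_i\le \alpha\big(\sum_{j\in C_r}\sum_i c(i,j)\hat x_{ij}+\sum_i f_i\hat y_i\big)$. Then $(\bar x,\bar y,\hat z)$ is an integral solution of the CFLPP instance (clients in $C_p$ pay penalty, clients in $C_r$ are served) whose cost is at most $\max\{\alpha(1+\frac{1}{\ell-1}),\ \ell\}\cdot\mathrm{OPT}_{LP}$ and in which each open facility serves at most $\beta(1+\frac{1}{\ell-1})u$ clients, for every $\ell\ge 2$.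
   Context: Instance of CFLPP: clients $C$, facilities $F$, opening costs $f_i\ge0$, metric service costs $c(i,j)\ge0$, penalties $p_j\ge0$, uniform capacity $u$. $\mathrm{LP}_{CFLPP}$: minimize $\sum_{j}\sum_{i}c(i,j)x_{ij}+\sum_if_iy_i+\sum_jp_jz_j$ subject to $\sum_ix_{ij}+z_j\ge1$ ($j\in C$), $\sum_jx_{ij}\le u y_i$ ($i\in F$), $x_{ij}\le y_i$, and $x,y,z\in[0,1]$. Let $\rho^*=(x^*,y^*,z^* )$ be an optimal solution with value $\mathrm{OPT}_{LP}$ and $\sum_ix^*_{ij}\le1$ for all $j$. Fix $\ell\ge2$, $C_p=\{j: z^*_j\ge1/\ell\}$, $C_r=C\setminus C_p$. Define $\hat z_j=1$, $\hat x_{ij}=0$ for $j\in C_p$; $\hat z_j=0$, $\hat x_{ij}=x^*_{ij}/\sum_{i'}x^*_{i'j}$ for $j\in C_r$; and $\hat y_i=\min\{1, y^*_i\max_{j\in C_r:x^*_{ij}>0}\hat x_{ij}/x^*_{ij}\}$ (or $y^*_i$ if the max is over an empty set). Then $(\hat x|_{C_r},\hat y)$ is feasible for the natural LP of capacitated facility location on clients $C_r$ with capacity $\frac{\ell}{\ell-1}u$. *)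

(* Defs.v *)
From mathcomp Require Import all_boot all_order all_algebra.
Set Implicit Arguments. Unset Strict Implicit. Unset Printing Implicit Defensive.
Import Order.TTheory GRing.Theory Num.Theory.
Local Open Scope ring_scope.

Section CFLPP.
Variables (R : realFieldType) (F C : finType).

Definition metric_costs (c : F -> C -> R) : Prop :=
  (forall i j, 0 <= c i j) /\
  (forall i i' j j', c i j <= c i j' + c i' j' + c i' j).

Definition is01 (r : R) : Prop := r = 0 \/ r = 1.

Definition cflpp_cost (c : F -> C -> R) (f : F -> R) (p : C -> R)
  (x : F -> C -> R) (y : F -> R) (z : C -> R) : R :=
  \sum_(j : C) \sum_(i : F) c i j * x i j + \sum_(i : F) f i * y i
  + \sum_(j : C) p j * z j.

Definition lp_cflpp_feasible (u : R)
  (x : F -> C -> R) (y : F -> R) (z : C -> R) : Prop :=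
  (forall j, 1 <= \sum_(i : F) x i j + z j) /\
  (forall i, \sum_(j : C) x i j <= u * y i) /\
  (forall i j, x i j <= y i) /\
  (forall i j, 0 <= x i j <= 1) /\
  (forall i, 0 <= y i <= 1) /\
  (forall j, 0 <= z j <= 1).

Definition in_Cp (l : R) (zs : C -> R) (j : C) : bool := 1 / l <= zs j.
Definition in_Cr (l : R) (zs : C -> R) (j : C) : bool := ~~ in_Cp l zs j.

Definition zhat (l : R) (zs : C -> R) (j : C) : R :=
  if in_Cp l zs j then 1 else 0.

Definition xhat (l : R) (xs : F -> C -> R) (zs : C -> R) (i : F) (j : C) : R :=
  if in_Cp l zs j then 0 else xs i j / \sum_(i' : F) xs i' j.

Definition yhat (l : R) (xs : F -> C -> R) (ys : F -> R) (zs : C -> R)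
  (i : F) : R :=
  if [exists j, in_Cr l zs j && (0 < xs i j)] then
    Num.min 1 (ys i * \big[Num.max/0]_(j : C | in_Cr l zs j && (0 < xs i j))
                         (xhat l xs zs i j / xs i j))
  else ys i.

Definition cfl_cost_Cr (l : R) (zs : C -> R) (c : F -> C -> R) (f : F -> R)
  (x : F -> C -> R) (y : F -> R) : R :=
  \sum_(j : C | in_Cr l zs j) \sum_(i : F) c i j * x i j
  + \sum_(i : F) f i * y i.

Definition ext_Cr (l : R) (zs : C -> R) (x : F -> C -> R) (i : F) (j : C) : R :=
  if in_Cr l zs j then x i j else 0.

End CFLPP.

(* Main.v *)
Require Import Defs.
From mathcomp Require Import all_boot all_order all_algebra.
Import Order.TTheory GRing.Theory Num.Theory.
Local Open Scope ring_scope.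
From mathcomp Require Import ring lra.

Lemma keyS (R : realFieldType) (S z l : R) : 2 <= l -> 1 <= S + z -> z < 1 / l ->
  0 < S /\ 1 / S <= l / (l - 1).
Proof.
move=> hl hs hz.
have l0 : 0 < l by lra.
have l1 : 0 < l - 1 by lra.
have zl : z * l < 1 by rewrite -ltr_pdivlMr.
have Sl : l - 1 < S * l by nra.
have S0 : 0 < S by nra.
split=> //.
rewrite ler_pdivrMr // mulrAC ler_pdivlMr //; nra.
Qed.

Theorem lemma1 (R : realFieldType) (F C : finType)
  (f : F -> R) (c : F -> C -> R) (p : C -> R) (u : R)
  (hf : forall i, 0 <= f i) (hc : metric_costs c) (hp : forall j, 0 <= p j)
  (hu : 0 <= u)
  (xs : F -> C -> R) (ys : F -> R) (zs : C -> R)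
  (hfeas : lp_cflpp_feasible u xs ys zs)
  (hopt : forall x y z, lp_cflpp_feasible u x y z ->
            cflpp_cost c f p xs ys zs <= cflpp_cost c f p x y z)
  (hsum1 : forall j, \sum_(i : F) xs i j <= 1)
  (l : R) (hl : 2 <= l)
  (alpha beta : R)
  (xb : F -> C -> R) (yb : F -> R)
  (hxb01 : forall i j, in_Cr l zs j -> is01 (xb i j))
  (hyb01 : forall i, is01 (yb i))
  (hxbyb : forall i j, in_Cr l zs j -> xb i j <= yb i)
  (hserve : forall j, in_Cr l zs j -> 1 <= \sum_(i : F) xb i j)
  (hcap : forall i, yb i = 1 ->
            \sum_(j : C | in_Cr l zs j) xb i j <= beta * (l / (l - 1) * u))
  (hcost : cfl_cost_Cr l zs c f xb yb
           <= alpha * cfl_cost_Cr l zs c f (xhat l xs zs) (yhat l xs ys zs)) :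
  let xe := ext_Cr l zs xb in
  let zh := zhat l zs in
  ((forall i j, is01 (xe i j)) /\ (forall i, is01 (yb i)) /\ (forall j, is01 (zh j))) /\
  (forall j, 1 <= \sum_(i : F) xe i j + zh j) /\
  (forall i j, xe i j <= yb i) /\
  cflpp_cost c f p xe yb zh
        <= Num.max (alpha * (1 + 1 / (l - 1))) l * cflpp_cost c f p xs ys zs /\
  (forall i, yb i = 1 -> \sum_(j : C) xe i j <= beta * (1 + 1 / (l - 1)) * u).
Proof.
move=> xe zh.
case: hfeas => [hcov [hcapx [hxy [hx01 [hy01 hz01]]]]].
have l0 : 0 < l by lra.
have l1 : 0 < l - 1 by lra.
set k := l / (l - 1).
have kE : 1 + 1 / (l - 1) = k by rewrite /k; field; lra.
have k0 : 0 <= k by rewrite /k divr_ge0 //; lra.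
have hyb0 : forall i, 0 <= yb i by move=> i; case: (hyb01 i) => ->; lra.
have hxe : forall i j, xe i j = if in_Cr l zs j then xb i j else 0 by [].
have hzh : forall j, zh j = if in_Cp l zs j then 1 else 0 by [].
have Cr_key : forall j, in_Cr l zs j ->
   0 < \sum_i xs i j /\ 1 / (\sum_i xs i j) <= k.
  move=> j; rewrite /in_Cr /in_Cp -ltNge => hj.
  by have := @keyS R _ _ _ hl (hcov j) hj.
have c0 := (proj1 hc).
have xhat_le : forall i j, in_Cr l zs j -> c i j * xhat l xs zs i j <= k * (c i j * xs i j).
  move=> i j hj; rewrite /xhat.
  have -> : in_Cp l zs j = false by move: hj; rewrite /in_Cr; case: (in_Cp _ _ _).
  have [S0 Sk] := Cr_key j hj.
  have := c0 i j; have := hx01 i j; move=> /andP[x0 _] cij.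
  have h1 : xs i j / (\sum_i' xs i' j) <= k * xs i j.
    by rewrite mulrC; apply: ler_wpM2r => //; rewrite -[_^-1]mul1r.
  by rewrite [k * _]mulrCA; apply: ler_wpM2l.
have xhat0 : forall i j, 0 <= c i j * xhat l xs zs i j.
  move=> i j; rewrite /xhat; case: (in_Cp _ _ _); first by rewrite mulr0.
  apply: mulr_ge0 => //; apply: divr_ge0; first by case/andP: (hx01 i j).
  by apply: sumr_ge0 => i' _; case/andP: (hx01 i' j).
have yhat_bd : forall i, 0 <= yhat l xs ys zs i <= k * ys i.
  move=> i; have /andP[y0 _] := hy01 i.
  rewrite /yhat; case: ifP => _; last first.
    apply/andP; split=> //; rewrite -[X in X <= _]mul1r; apply: ler_wpM2r => //.
    rewrite /k ler_pdivlMr //; lra.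
  set M := \big[_/_]_(j | _) _.
  have termE : forall j, in_Cr l zs j && (0 < xs i j) ->
      0 <= xhat l xs zs i j / xs i j <= k.
    move=> j /andP[hj xp]; rewrite /xhat.
    have -> : in_Cp l zs j = false by move: hj; rewrite /in_Cr; case: (in_Cp _ _ _).
    have [S0 Sk] := Cr_key j hj.
    rewrite mulrAC divff ?mul1r; last by rewrite gt_eqF.
    by move: Sk; rewrite mul1r => ->; rewrite invr_ge0 ltW.
  have M0 : 0 <= M.
    apply: (big_ind (fun x => 0 <= x)) => //; first by move=> x y hx hy; rewrite le_max hx.
    by move=> j /termE /andP[].
  have Mk : M <= k.
    apply: (big_ind (fun x => x <= k)) => //; first by move=> x y hx hy; rewrite ge_max hx hy.
    by move=> j /termE /andP[].
  apply/andP; split.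
    by rewrite le_min ler01 mulr_ge0.
  rewrite ge_min; apply/orP; right; rewrite mulrC; exact: ler_wpM2r.
split.
  split; last split=> //.
    move=> i j; rewrite hxe; case: ifP => h; [exact: hxb01 | by left].
  by move=> j; rewrite hzh; case: ifP; [right|left].
split.
  move=> j; rewrite hzh; case: ifP => hp'.
    rewrite big1 ?add0r // => i _; rewrite hxe /in_Cr hp' //.
  rewrite addr0; have hj : in_Cr l zs j by rewrite /in_Cr hp'.
  by under eq_bigr => i _ do rewrite hxe hj; exact: hserve.
split.
  by move=> i j; rewrite hxe; case: ifP => h; [exact: hxbyb|].
split; last first.
  move=> i hi; rewrite kE.
  rewrite (eq_bigr (fun j => if in_Cr l zs j then xb i j else 0)) // -big_mkcond /=.
  by rewrite -mulrA; exact: hcap.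
set X := \sum_j \sum_i c i j * xs i j.
set Y := \sum_i f i * ys i.
set Z := \sum_j p j * zs j.
have X0 : 0 <= X by apply: sumr_ge0 => j _; apply: sumr_ge0 => i _; apply: mulr_ge0 => //; case/andP: (hx01 i j).
have Y0 : 0 <= Y by apply: sumr_ge0 => i _; apply: mulr_ge0 => //; case/andP: (hy01 i).
have Z0 : 0 <= Z by apply: sumr_ge0 => j _; apply: mulr_ge0 => //; case/andP: (hz01 j).
set A := cfl_cost_Cr l zs c f (xhat l xs zs) (yhat l xs ys zs).
have A0 : 0 <= A.
  apply: addr_ge0; apply: sumr_ge0 => i _; last first.
    by apply: mulr_ge0 => //; case/andP: (yhat_bd i).
  by apply: sumr_ge0.
have Ak : A <= k * (X + Y).
  rewrite mulrDr /A /cfl_cost_Cr; apply: lerD.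
    rewrite big_mkcond /= /X mulr_sumr; apply: ler_sum => j _.
    case: ifP => hj.
      rewrite mulr_sumr; apply: ler_sum => i _; exact: xhat_le.
    apply: mulr_ge0 => //; apply: sumr_ge0 => i _; apply: mulr_ge0 => //; by case/andP: (hx01 i j).
  rewrite /Y mulr_sumr; apply: ler_sum => i _.
  rewrite mulrCA; apply: ler_wpM2l => //; by case/andP: (yhat_bd i).
have costE : cflpp_cost c f p xe yb zh = cfl_cost_Cr l zs c f xb yb + \sum_j p j * zh j.
  rewrite /cflpp_cost /cfl_cost_Cr; congr (_ + _ + _).
  rewrite [RHS]big_mkcond /=; apply: eq_bigr => j _; rewrite /xe /ext_Cr.
  by case: ifP => // _; rewrite big1 // => i _; rewrite mulr0.
have PZ : \sum_j p j * zh j <= l * Z.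
  rewrite /Z mulr_sumr; apply: ler_sum => j _; rewrite hzh.
  have /andP[z0 _] := hz01 j; have pj := hp j.
  case: ifP => hj.
    move: hj; rewrite /in_Cp ler_pdivrMr // => hj.
    rewrite mulr1 mulrCA -[X in X <= _]mulr1; apply: ler_wpM2l => //; lra.
  by rewrite mulr0 !mulr_ge0 // ltW.
have -> : cflpp_cost c f p xs ys zs = X + Y + Z by [].
rewrite costE kE.
set M := Num.max _ _.
have Mak : alpha * k <= M by rewrite le_max lexx.
have Ml : l <= M by rewrite le_max lexx orbT.
have hA : alpha * A <= M * (X + Y).
  case: (lerP 0 alpha) => ha.
    apply: (le_trans (ler_wpM2l ha Ak)); rewrite mulrA; apply: ler_wpM2r => //; lra.
  have : alpha * A <= 0 by rewrite nmulr_rle0 //.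
  have : 0 <= M * (X + Y) by apply: mulr_ge0; lra.
  lra.
have hZ : l * Z <= M * Z by apply: ler_wpM2r.
rewrite mulrDr; apply: lerD; last by apply: le_trans PZ hZ.
exact: le_trans hcost hA.
Qed.
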